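(* There is an absolute constant $c>0$ such that for all $n\ge 3$ and $\tau\ge 1$ there exist $\varepsilon>0$ and $n$ entities moving in $\mathbb{R}^1$ along piecewise-linear trajectories with vertices at common times $t_0<\dots<t_\tau$ for which every central trajectory has complexity at least $c\,\tau n^2$.
   Context: Setting: $\mathcal{X}$ is a set of $n$ entities, each moving in $\mathbb{R}^d$ along a piecewise-linear trajectory $\sigma:[t_0,t_\tau]\to\mathbb{R}^d$ with vertices at the common times $t_0<\dots<t_\tau$. A parameter $\varepsilon\ge 0$ is fixed. Two entities $\sigma,\psi$ are $\varepsilon$-connected at time $t$ if there is a sequence $\sigma=\sigma_0,\dots,\sigma_k=\psi$ of entities with $\|\sigma_j(t)\sigma_{j+1}(t)\|\le\varepsilon$ for all $j$. A trajectoid is a function $\mathcal{T}:[t_0,t_\tau]\to\mathcal{X}$ such that whenever $\mathcal{T}$ is discontinuous at time $t$, switching from $\sigma$ to $\psi$, the entities $\sigma,\psi$ are $\varepsilon$-connected at time $t$. $D(\sigma,t)=\max_{\psi\in\mathcal{X}}\|\sigma(t)\psi(t)\|$. A central trajectory is a trajectoid minimizing $\int_{t_0}^{t_\tau}D(\mathcal{T}(t),t)\,dt$. The complexity of a trajectoid is the number of pieces of the curve $t\mapsto\mathcal{T}(t)(t)$, i.e. the number of maximal time intervals on which $\mathcal{T}$ is a single entity and that entity moves linearly. *)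

(* Defs.v *)
From Stdlib Require Import Reals Lra List Relations.
Open Scope R_scope.

(* Entities are indexed by natural numbers sigma < n.  A configuration is
   traj : nat -> R -> R, where traj sigma u is the position (in R^1) of
   entity sigma at time u. *)

Definition piecewise_linear (n tau : nat) (t : nat -> R) (traj : nat -> R -> R) : Prop :=
  (forall k, (k < tau)%nat -> t k < t (S k)) /\
  (forall sigma k, (sigma < n)%nat -> (k < tau)%nat ->
     exists a b : R, forall u, t k <= u <= t (S k) -> traj sigma u = a * u + b).

Definition eps_close (eps : R) (n : nat) (traj : nat -> R -> R) (u : R)
  (sigma psi : nat) : Prop :=
  (sigma < n)%nat /\ (psi < n)%nat /\ Rabs (traj sigma u - traj psi u) <= eps.

Definition eps_connected (eps : R) (n : nat) (traj : nat -> R -> R) (u : R)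
  (sigma psi : nat) : Prop :=
  clos_refl_trans nat (eps_close eps n traj u) sigma psi.

Definition Dmax (n : nat) (traj : nat -> R -> R) (sigma : nat) (u : R) : R :=
  fold_right Rmax 0 (map (fun psi => Rabs (traj sigma u - traj psi u)) (seq 0 n)).

Definition near_value (T : R -> nat) (t0 t1 u : R) (sigma : nat) : Prop :=
  forall d, d > 0 -> exists s, t0 <= s <= t1 /\ Rabs (s - u) < d /\ T s = sigma.

(* Trajectoid: T maps [t0,t1] into the entities, and whenever T switches
   (is discontinuous) at time u, all entities it switches between are
   epsilon-connected at time u. *)
Definition trajectoid (eps : R) (n : nat) (traj : nat -> R -> R) (t0 t1 : R)
  (T : R -> nat) : Prop :=
  (forall u, t0 <= u <= t1 -> (T u < n)%nat) /\
  (forall u sigma psi, t0 <= u <= t1 ->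
     near_value T t0 t1 u sigma -> near_value T t0 t1 u psi ->
     eps_connected eps n traj u sigma psi).

Definition central (eps : R) (n : nat) (traj : nat -> R -> R) (t0 t1 : R)
  (T : R -> nat) : Prop :=
  trajectoid eps n traj t0 t1 T /\
  exists pr : Riemann_integrable (fun u => Dmax n traj (T u) u) t0 t1,
    forall T', trajectoid eps n traj t0 t1 T' ->
    forall pr' : Riemann_integrable (fun u => Dmax n traj (T' u) u) t0 t1,
      RiemannInt pr <= RiemannInt pr'.

Definition complexity_ge (traj : nat -> R -> R) (t0 t1 : R) (T : R -> nat)
  (x : R) : Prop :=
  forall (m : nat) (s : nat -> R) (ent : nat -> nat),
    s 0%nat = t0 -> s m = t1 ->
    (forall i, (i < m)%nat -> s i < s (S i)) ->
    (forall i, (i < m)%nat -> forall u, s i < u < s (S i) -> T u = ent i) ->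
    (forall i, (i < m)%nat -> exists a b : R,
        forall u, s i < u < s (S i) -> traj (ent i) u = a * u + b) ->
    x <= INR m.

(* Main.v *)
Require Import Defs.
From Stdlib Require Import Reals Lra Lia List Relations Arith.
From Coquelicot Require Import Coquelicot.
Open Scope R_scope.

Lemma fmax_ge : forall (F : nat -> R) l x, In x l -> F x <= fold_right Rmax 0 (map F l).
Proof.
  intros F l; induction l as [|y l IH]; simpl; intros x Hx; [contradiction|].
  destruct Hx as [<-|Hx]; [apply Rmax_l|].
  eapply Rle_trans; [apply IH; exact Hx| apply Rmax_r].
Qed.

Lemma fmax_le : forall (F : nat -> R) l B, 0 <= B -> (forall x, In x l -> F x <= B) ->
  fold_right Rmax 0 (map F l) <= B.
Proof.
  intros F l B HB; induction l as [|y l IH]; simpl; intros H; [lra|].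
  apply Rmax_lub; [apply H; auto| apply IH; intros; apply H; auto].
Qed.

Lemma Rmax_diff : forall a b c d e, Rabs (a - c) <= e -> Rabs (b - d) <= e ->
  Rabs (Rmax a b - Rmax c d) <= e.
Proof.
  intros a b c d e H1 H2; unfold Rmax;
  destruct (Rle_dec a b); destruct (Rle_dec c d);
  revert H1 H2; unfold Rabs; repeat destruct Rcase_abs; intros; lra.
Qed.

Lemma fmax_diff : forall (F G : nat -> R) l e, 0 <= e -> (forall x, In x l -> Rabs (F x - G x) <= e) ->
  Rabs (fold_right Rmax 0 (map F l) - fold_right Rmax 0 (map G l)) <= e.
Proof.
  intros F G l e He; induction l as [|y l IH]; simpl; intros H.
  - rewrite Rminus_0_r, Rabs_R0; lra.
  - apply Rmax_diff; [apply H; auto| apply IH; intros; apply H; auto].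
Qed.

Fixpoint best (D : nat -> R) (d : nat) (l : list nat) : nat :=
  match l with
  | nil => d
  | x :: l' => let y := best D d l' in if Rle_dec (D x) (D y) then x else y
  end.

Lemma best_in : forall D d l, best D d l = d \/ In (best D d l) l.
Proof.
  intros D d l; induction l as [|x l IH]; simpl; [auto|].
  destruct (Rle_dec _ _); [auto|]. destruct IH; auto.
Qed.

Lemma best_min : forall D d l x, In x l -> D (best D d l) <= D x.
Proof.
  intros D d l; induction l as [|y l IH]; simpl; intros x Hx; [contradiction|].
  destruct (Rle_dec (D y) (D (best D d l))) as [h|h].
  - destruct Hx as [<-|Hx]; [lra|]. eapply Rle_trans; [exact h| apply IH; auto].
  - destruct Hx as [<-|Hx]; [lra|]. apply IH; auto.
Qed.

Lemma lip_cont : forall (f : R -> R) M x, 0 <= M ->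
  (forall u u', Rabs (f u - f u') <= M * Rabs (u - u')) -> continuity_pt f x.
Proof.
  intros f M x HM H.
  unfold continuity_pt, continue_in, limit1_in, limit_in; simpl; unfold R_dist.
  intros e He. exists (e / (M + 1)). split.
  - apply Rdiv_lt_0_compat; lra.
  - intros y [_ Hy]. eapply Rle_lt_trans; [apply H|].
    apply Rle_lt_trans with (M * (e / (M+1))).
    + apply Rmult_le_compat_l; lra.
    + apply Rlt_le_trans with ((M+1) * (e/(M+1))).
      * apply Rmult_lt_compat_r; [apply Rdiv_lt_0_compat|]; lra.
      * right; field; lra.
Qed.

Lemma exC1 : forall (f : R -> R) a b c, a <= b <= c -> ex_RInt f a c -> ex_RInt f a b.
Proof. intros. apply (ex_RInt_Chasles_1 (V:=R_CompleteNormedModule) f a b c); auto. Qed.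
Lemma exC2 : forall (f : R -> R) a b c, a <= b <= c -> ex_RInt f a c -> ex_RInt f b c.
Proof. intros. apply (ex_RInt_Chasles_2 (V:=R_CompleteNormedModule) f a b c); auto. Qed.

Lemma RInt_split : forall (f : R -> R) a b c, a <= b <= c -> ex_RInt f a c ->
  RInt f a c = RInt f a b + RInt f b c.
Proof.
  intros f a b c H Hex.
  rewrite <- (RInt_Chasles (V:=R_CompleteNormedModule) f a b c).
  - reflexivity.
  - eapply exC1; eauto.
  - eapply exC2; eauto.
Qed.

Lemma int_contra : forall (f g : R -> R) a0 b0 a b dl,
  a0 <= a -> a < b -> b <= b0 -> 0 < dl ->
  ex_RInt f a0 b0 -> ex_RInt g a0 b0 ->
  (forall x, a0 < x < b0 -> g x <= f x) ->
  (forall x, a < x < b -> g x + dl <= f x) ->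
  RInt g a0 b0 + dl * (b - a) <= RInt f a0 b0.
Proof.
  intros f g a0 b0 a b dl H1 H2 H3 Hd Ef Eg Hle Hlt.
  assert (Ef1 : ex_RInt f a b0) by (eapply exC2; [|exact Ef]; lra).
  assert (Eg1 : ex_RInt g a b0) by (eapply exC2; [|exact Eg]; lra).
  rewrite (RInt_split f a0 a b0), (RInt_split g a0 a b0) by (auto; lra).
  rewrite (RInt_split f a b b0), (RInt_split g a b b0) by (auto; lra).
  assert (A1 : RInt g a0 a <= RInt f a0 a).
  { apply RInt_le; [lra| eapply exC1; [|exact Eg]; lra
      | eapply exC1; [|exact Ef]; lra|].
    intros; apply Hle; lra. }
  assert (A3 : RInt g b b0 <= RInt f b b0).
  { apply RInt_le; [lra| eapply exC2; [|exact Eg1]; lra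
      | eapply exC2; [|exact Ef1]; lra|].
    intros; apply Hle; lra. }
  assert (Egab : ex_RInt g a b) by (eapply exC1; [|exact Eg1]; lra).
  assert (Efab : ex_RInt f a b) by (eapply exC1; [|exact Ef1]; lra).
  assert (A2 : RInt (fun x => g x + dl) a b <= RInt f a b).
  { apply RInt_le; [lra| | exact Efab |].
    - apply (ex_RInt_plus g (fun _ => dl)); [exact Egab| apply ex_RInt_const].
    - intros; apply Hlt; lra. }
  assert (E2 : RInt (fun x => g x + dl) a b = RInt g a b + dl * (b - a)).
  { rewrite (RInt_plus g (fun _ => dl)); [| exact Egab | apply ex_RInt_const].
    rewrite RInt_const. unfold scal; simpl; unfold mult; simpl. unfold plus; simpl. ring. }
  lra.
Qed.

Lemma t_mono : forall tau (t : nat -> R), (forall k, (k < tau)%nat -> t k < t (S k)) ->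
  forall a b, (a <= b <= tau)%nat -> t a <= t b.
Proof.
  intros tau t Ht a b [Hab Hb]. induction Hab; [lra|].
  apply Rle_trans with (t m); [apply IHHab; lia| left; apply Ht; lia].
Qed.

Lemma pl_lip_core : forall n tau t traj sigma, piecewise_linear n tau t traj -> (sigma < n)%nat ->
  forall k, (k <= tau)%nat -> exists M, 0 <= M /\ forall u u', t 0%nat <= u -> u <= u' -> u' <= t k ->
     Rabs (traj sigma u - traj sigma u') <= M * (u' - u).
Proof.
  intros n tau t traj sigma [Ht Hl] Hs k. induction k as [|k IH]; intros Hk.
  - exists 0. split; [lra|]. intros u u' H1 H2 H3. assert (u = u') by lra. subst.
    rewrite Rminus_diag, Rabs_R0; lra.
  - destruct (IH ltac:(lia)) as [M [HM HH]].
    destruct (Hl sigma k Hs ltac:(lia)) as [a [b Hab]].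
    assert (Htk : t 0%nat <= t k) by (apply (t_mono tau); auto; lia).
    assert (Htk1 : t k < t (S k)) by (apply Ht; lia).
    exists (M + Rabs a). split; [pose proof (Rabs_pos a); lra|].
    intros u u' H1 H2 H3. pose proof (Rabs_pos a).
    destruct (Rle_dec u' (t k)).
    + eapply Rle_trans; [apply HH; auto|]. nra.
    + destruct (Rle_dec (t k) u).
      * rewrite (Hab u), (Hab u') by lra.
        replace (a * u + b - (a * u' + b)) with (a * (u - u')) by ring.
        rewrite Rabs_mult, (Rabs_left1 (u - u')) by lra. nra.
      * pose proof (HH u (t k) H1 ltac:(lra) ltac:(lra)).
        assert (E: Rabs (traj sigma (t k) - traj sigma u') <= Rabs a * (u' - t k)).
        { rewrite (Hab (t k)), (Hab u') by lra.
          replace (a * t k + b - (a * u' + b)) with (a * (t k - u')) by ring.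
          rewrite Rabs_mult, (Rabs_left1 (t k - u')) by lra. nra. }
        replace (traj sigma u - traj sigma u') with
          ((traj sigma u - traj sigma (t k)) + (traj sigma (t k) - traj sigma u')) by ring.
        eapply Rle_trans; [apply Rabs_triang|]. nra.
Qed.

Definition LipOn (f : R -> R) (a b M : R) :=
  forall u u', a <= u <= b -> a <= u' <= b -> Rabs (f u - f u') <= M * Rabs (u - u').

Lemma pl_lip : forall n tau t traj sigma, piecewise_linear n tau t traj -> (sigma < n)%nat ->
  exists M, 0 <= M /\ LipOn (traj sigma) (t 0%nat) (t tau) M.
Proof.
  intros n tau t traj sigma HP Hs.
  destruct (pl_lip_core n tau t traj sigma HP Hs tau ltac:(lia)) as [M [HM H]].
  exists M; split; auto. intros u u' Hu Hu'.
  destruct (Rle_dec u u').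
  - rewrite (Rabs_left1 (u - u')) by lra. replace (- (u - u')) with (u' - u) by ring.
    apply H; lra.
  - rewrite Rabs_minus_sym, (Rabs_right (u - u')) by lra. apply H; lra.
Qed.

Lemma pl_lip_unif : forall n tau t traj, piecewise_linear n tau t traj ->
  forall n', (n' <= n)%nat -> exists M, 0 <= M /\ forall sigma, (sigma < n')%nat ->
     LipOn (traj sigma) (t 0%nat) (t tau) M.
Proof.
  intros n tau t traj HP n'. induction n' as [|n' IH]; intros Hn.
  - exists 0; split; [lra|]; intros; lia.
  - destruct (IH ltac:(lia)) as [M [HM H]].
    destruct (pl_lip n tau t traj n' HP ltac:(lia)) as [M' [HM' H']].
    exists (Rmax M M'); split; [eapply Rle_trans; [exact HM| apply Rmax_l]|].
    intros sigma Hs u u' Hu Hu'. pose proof (Rabs_pos (u - u')).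
    destruct (Nat.eq_dec sigma n') as [->|].
    + eapply Rle_trans; [apply H'; auto|]. apply Rmult_le_compat_r; auto; apply Rmax_r.
    + eapply Rle_trans; [apply H; auto; lia|]. apply Rmult_le_compat_r; auto; apply Rmax_l.
Qed.

Lemma absle : forall z y, Rabs z <= y -> - y <= z <= y.
Proof. intros z y; unfold Rabs; destruct Rcase_abs; intros; lra. Qed.

Definition uarg n traj u a := (a < n)%nat /\
  forall sigma, (sigma < n)%nat -> sigma <> a -> Dmax n traj a u < Dmax n traj sigma u.
Definition Tstar n traj u := best (fun s => Dmax n traj s u) 0%nat (seq 0 n).
Definition gmin n traj u := Dmax n traj (Tstar n traj u) u.

Lemma Tstar_lt : forall n traj u, (1 <= n)%nat -> (Tstar n traj u < n)%nat.
Proof.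
  intros n traj u Hn. unfold Tstar.
  destruct (best_in (fun s => Dmax n traj s u) 0%nat (seq 0 n)) as [->|H]; [lia|].
  apply in_seq in H; lia.
Qed.

Lemma gmin_le : forall n traj u sigma, (sigma < n)%nat -> gmin n traj u <= Dmax n traj sigma u.
Proof.
  intros. unfold gmin, Tstar. apply (best_min (fun s => Dmax n traj s u)). apply in_seq; lia.
Qed.

Lemma D_lip : forall n traj a b M sigma, 0 <= M -> (sigma < n)%nat ->
  (forall s, (s < n)%nat -> LipOn (traj s) a b M) -> LipOn (Dmax n traj sigma) a b (2 * M).
Proof.
  intros n traj a b M sigma HM Hs HL u u' Hu Hu'. unfold Dmax.
  apply fmax_diff. { pose proof (Rabs_pos (u - u')); nra. }
  intros x Hx. apply in_seq in Hx.
  pose proof (HL sigma Hs u u' Hu Hu'). pose proof (HL x ltac:(lia) u u' Hu Hu').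
  replace (2 * M * Rabs (u - u')) with (2 * (M * Rabs (u - u'))) by ring.
  revert H H0. generalize (M * Rabs (u - u')). intros r H H0.
  revert H H0; unfold Rabs; repeat destruct Rcase_abs; intros; lra.
Qed.

Lemma gmin_lip : forall n traj a b M, 0 <= M -> (1 <= n)%nat ->
  (forall s, (s < n)%nat -> LipOn (traj s) a b M) -> LipOn (gmin n traj) a b (2 * M).
Proof.
  intros n traj a b M HM Hn HL u u' Hu Hu'.
  pose proof (Tstar_lt n traj u Hn). pose proof (Tstar_lt n traj u' Hn).
  pose proof (gmin_le n traj u (Tstar n traj u') H0).
  pose proof (gmin_le n traj u' (Tstar n traj u) H).
  pose proof (D_lip n traj a b M _ HM H HL u u' Hu Hu').
  pose proof (D_lip n traj a b M _ HM H0 HL u u' Hu Hu').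
  unfold gmin in *. revert H1 H2 H3 H4.
  generalize (2 * M * Rabs (u - u')). intros r. unfold Rabs; repeat destruct Rcase_abs; intros; lra.
Qed.

Definition clamp (a b u : R) := Rmax a (Rmin b u).

Lemma clamp_in : forall a b u, a <= b -> a <= clamp a b u <= b.
Proof. intros; unfold clamp, Rmax, Rmin; repeat destruct Rle_dec; lra. Qed.
Lemma clamp_id : forall a b u, a <= u <= b -> clamp a b u = u.
Proof. intros; unfold clamp, Rmax, Rmin; repeat destruct Rle_dec; lra. Qed.
Lemma clamp_lip : forall a b u u', a <= b -> Rabs (clamp a b u - clamp a b u') <= Rabs (u - u').
Proof. intros; unfold clamp, Rmax, Rmin; repeat destruct Rle_dec; unfold Rabs;
  repeat destruct Rcase_abs; lra. Qed.

Lemma lip_exRInt : forall f a b M, a <= b -> 0 <= M -> LipOn f a b M -> ex_RInt f a b.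
Proof.
  intros f a b M Hab HM HL.
  apply (ex_RInt_ext (fun u => f (clamp a b u))).
  { intros x Hx. rewrite Rmin_left, Rmax_right in Hx by lra. rewrite clamp_id; lra. }
  apply ex_RInt_Reals_1. apply continuity_implies_RiemannInt; auto.
  intros x _. apply (lip_cont _ M); auto. intros u u'.
  eapply Rle_trans; [apply HL; apply clamp_in; lra|].
  apply Rmult_le_compat_l; auto. apply clamp_lip; lra.
Qed.

Definition GHyp n tau eps (t : nat -> R) traj :=
  (1 <= n)%nat /\ (1 <= tau)%nat /\ piecewise_linear n tau t traj /\
  forall s p u, (s < n)%nat -> (p < n)%nat -> t 0%nat <= u <= t tau ->
     Rabs (traj s u - traj p u) <= eps.

Lemma GHyp_t : forall n tau eps t traj, GHyp n tau eps t traj -> t 0%nat < t tau.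
Proof.
  intros n tau eps t traj [_ [Htau [[Ht _] _]]].
  apply Rlt_le_trans with (t 1%nat); [apply Ht; lia|]. apply (t_mono tau); auto; lia.
Qed.

Lemma GHyp_M : forall n tau eps t traj, GHyp n tau eps t traj ->
  exists M, 0 <= M /\ forall s, (s < n)%nat -> LipOn (traj s) (t 0%nat) (t tau) M.
Proof.
  intros n tau eps t traj [_ [_ [HP _]]]. apply (pl_lip_unif n tau t traj HP n). lia.
Qed.

Lemma Tstar_int : forall n tau eps t traj, GHyp n tau eps t traj ->
  ex_RInt (fun u => Dmax n traj (Tstar n traj u) u) (t 0%nat) (t tau).
Proof.
  intros n tau eps t traj G. pose proof (GHyp_t _ _ _ _ _ G).
  destruct (GHyp_M _ _ _ _ _ G) as [M [HM HL]].
  apply (lip_exRInt _ _ _ (2*M)); [lra| lra|]. apply gmin_lip; auto. apply G.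
Qed.

Lemma Tstar_traj : forall n tau eps t traj, GHyp n tau eps t traj ->
  trajectoid eps n traj (t 0%nat) (t tau) (Tstar n traj).
Proof.
  intros n tau eps t traj G. split.
  - intros; apply Tstar_lt; apply G.
  - intros u s p Hu Hs Hp.
    destruct (Hs 1 ltac:(lra)) as [x [Hx [_ <-]]].
    destruct (Hp 1 ltac:(lra)) as [y [Hy [_ <-]]].
    apply rt_step. split; [apply Tstar_lt, G|]. split; [apply Tstar_lt, G|].
    apply G; auto; apply Tstar_lt, G.
Qed.

Lemma traj_lt : forall eps n traj a b T u, trajectoid eps n traj a b T -> a <= u <= b -> (T u < n)%nat.
Proof. intros eps n traj a b T u [H _] Hu; auto. Qed.

Lemma Tstar_central : forall n tau eps t traj, GHyp n tau eps t traj ->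
  central eps n traj (t 0%nat) (t tau) (Tstar n traj).
Proof.
  intros n tau eps t traj G. split; [apply (Tstar_traj n tau); auto|].
  exists (ex_RInt_Reals_0 _ _ _ (Tstar_int n tau eps t traj G)).
  intros T' HT' pr'. apply RiemannInt_P19. { pose proof (GHyp_t _ _ _ _ _ G); lra. }
  intros x Hx. apply gmin_le. apply (traj_lt eps n traj (t 0%nat) (t tau)); auto; lra.
Qed.

Lemma central_piece : forall n tau eps t traj T e a b u0, GHyp n tau eps t traj ->
  central eps n traj (t 0%nat) (t tau) T -> (e < n)%nat ->
  t 0%nat <= a -> a < b -> b <= t tau -> (forall u, a < u < b -> T u = e) ->
  a <= u0 <= b -> Dmax n traj e u0 = gmin n traj u0.
Proof.
  intros n tau eps t traj T e a b u0 G [HT [pr Hpr]] He Ha Hab Hb HTe Hu0.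
  destruct (GHyp_M _ _ _ _ _ G) as [M [HM HL]].
  pose proof (gmin_le n traj u0 e He) as Hge.
  destruct (Req_dec (Dmax n traj e u0) (gmin n traj u0)) as [|Hne]; auto. exfalso.
  set (Dl := Dmax n traj e u0 - gmin n traj u0).
  assert (HDl : 0 < Dl) by (unfold Dl; lra).
  set (r := Dl / (2 * (4 * M + 1))).
  assert (Hr : 0 < r) by (unfold r; apply Rdiv_lt_0_compat; lra).
  assert (Hr2 : (4 * M) * r <= Dl / 2).
  { unfold r. apply Rle_trans with ((4*M+1) * (Dl / (2 * (4 * M + 1)))).
    - apply Rmult_le_compat_r; [|lra]. left; apply Rdiv_lt_0_compat; lra.
    - right; field; lra. }
  set (a' := Rmax a (u0 - r)). set (b' := Rmin b (u0 + r)).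
  assert (Ha' : a <= a' /\ u0 - r <= a') by (unfold a'; split; [apply Rmax_l|apply Rmax_r]).
  assert (Hb' : b' <= b /\ b' <= u0 + r) by (unfold b'; split; [apply Rmin_l|apply Rmin_r]).
  assert (Hab' : a' < b') by (unfold a', b', Rmax, Rmin; repeat destruct Rle_dec; lra).
  assert (Hin : forall x, a' < x < b' -> gmin n traj x + Dl / 2 <= Dmax n traj (T x) x).
  { intros x Hx. rewrite HTe by lra.
    assert (Hx0 : t 0%nat <= x <= t tau) by lra.
    assert (Hu0' : t 0%nat <= u0 <= t tau) by lra.
    pose proof (D_lip n traj _ _ M e HM He HL x u0 Hx0 Hu0').
    pose proof (gmin_lip n traj _ _ M HM ltac:(apply G) HL x u0 Hx0 Hu0').
    assert (Rabs (x - u0) <= r) by (unfold Rabs; destruct Rcase_abs; lra).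
    assert (M * Rabs (x - u0) <= M * r) by (apply Rmult_le_compat_l; auto).
    rewrite Rmult_assoc in H, H0. apply absle in H. apply absle in H0.
    unfold Dl in *. lra. }
  pose proof (Tstar_int n tau eps t traj G) as Es.
  pose proof (ex_RInt_Reals_1 _ _ _ pr) as Ef.
  pose proof (int_contra (fun u => Dmax n traj (T u) u) (fun u => Dmax n traj (Tstar n traj u) u)
     (t 0%nat) (t tau) a' b' (Dl/2) ltac:(lra) Hab' ltac:(lra) ltac:(lra) Ef Es) as IC.
  assert (IC2 : RInt (fun u => Dmax n traj (Tstar n traj u) u) (t 0%nat) (t tau) + Dl / 2 * (b' - a')
    <= RInt (fun u => Dmax n traj (T u) u) (t 0%nat) (t tau)).
  { apply IC.
    - intros x Hx. apply gmin_le. apply (traj_lt eps n traj (t 0%nat) (t tau)); auto; lra.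
    - intros x Hx. apply Hin; auto. }
  pose proof (Hpr (Tstar n traj) (Tstar_traj n tau eps t traj G) (ex_RInt_Reals_0 _ _ _ Es)) as HH.
  rewrite <- !RInt_Reals in HH.
  assert (0 < Dl / 2 * (b' - a')) by (apply Rmult_lt_0_compat; lra).
  lra.
Qed.

Definition InPiece (s : nat -> R) (m : nat) u i := (i < m)%nat /\ s i <= u < s (S i).

Lemma piece_exists : forall (s : nat -> R) m u, s 0%nat <= u -> u < s m ->
  exists i, InPiece s m u i.
Proof.
  intros s m u H0. induction m as [|m IH]; intros H1; [lra|].
  destruct (Rlt_dec u (s m)) as [h|h].
  - destruct (IH h) as [i [Hi Hu]]. exists i; split; auto.
  - exists m; split; [lia| lra].
Qed.

Lemma Gfinal : forall n tau eps t traj T m s ent, GHyp n tau eps t traj ->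
  central eps n traj (t 0%nat) (t tau) T ->
  s 0%nat = t 0%nat -> s m = t tau ->
  (forall i, (i < m)%nat -> s i < s (S i)) ->
  (forall i, (i < m)%nat -> forall u, s i < u < s (S i) -> T u = ent i) ->
  (forall u a, t 0%nat <= u < t tau -> uarg n traj u a -> exists i, InPiece s m u i) /\
  (forall u u' a a' i i', u < u' -> uarg n traj u a -> uarg n traj u' a' -> a <> a' ->
     InPiece s m u i -> InPiece s m u' i' -> (i < i')%nat).
Proof.
  intros n tau eps t traj T m s ent G HC Hs0 Hsm Hs HT.
  assert (Hmono : forall a b, (a <= b <= m)%nat -> s a <= s b) by (apply (t_mono m); auto).
  assert (Hent : forall i u a, InPiece s m u i -> uarg n traj u a -> ent i = a).
  { intros i u a [Hi Hu] [Ha Hua].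
    assert (Hsi : t 0%nat <= s i) by (rewrite <- Hs0; apply Hmono; lia).
    assert (Hsi1 : s (S i) <= t tau) by (rewrite <- Hsm; apply Hmono; lia).
    pose proof (Hs i Hi).
    assert (He : (ent i < n)%nat).
    { rewrite <- (HT i Hi ((s i + s (S i))/2)) by lra.
      apply (traj_lt eps n traj (t 0%nat) (t tau)); [apply HC| lra]. }
    pose proof (central_piece n tau eps t traj T (ent i) (s i) (s (S i)) u G HC He Hsi
      ltac:(auto) Hsi1 (HT i Hi) ltac:(lra)) as E.
    destruct (Nat.eq_dec (ent i) a) as [|Hne]; auto. exfalso.
    pose proof (Hua _ He Hne). pose proof (gmin_le n traj u a Ha). lra. }
  split.
  - intros u a Hu _. apply piece_exists; lra.
  - intros u u' a a' i i' Hlt Hua Hua' Hne Hi Hi'.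
    destruct (Nat.lt_ge_cases i i') as [|Hge]; auto. exfalso.
    destruct (Nat.eq_dec i i') as [<-|Hne2].
    + apply Hne. rewrite <- (Hent i u a Hi Hua). apply (Hent i u' a' Hi' Hua').
    + destruct Hi as [Hi1 Hi2]. destruct Hi' as [Hi1' Hi2'].
      assert (s (S i') <= s i) by (apply Hmono; lia). lra.
Qed.

Lemma uarg_crit : forall n traj u a B, (a < n)%nat ->
  (forall p, (p < n)%nat -> Rabs (traj a u - traj p u) <= B) ->
  (forall s, (s < n)%nat -> s <> a -> exists p, (p < n)%nat /\ B < Rabs (traj s u - traj p u)) ->
  uarg n traj u a.
Proof.
  intros n traj u a B Ha H1 H2. split; auto. intros s Hs Hne.
  assert (HB : 0 <= B) by (eapply Rle_trans; [apply Rabs_pos| apply (H1 a Ha)]).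
  apply Rle_lt_trans with B.
  - unfold Dmax. apply fmax_le; auto. intros x Hx; apply in_seq in Hx; apply H1; lia.
  - destruct (H2 s Hs Hne) as [p [Hp Hlt]]. eapply Rlt_le_trans; [exact Hlt|].
    unfold Dmax. apply (fmax_ge (fun p => Rabs (traj s u - traj p u))). apply in_seq; lia.
Qed.

Definition tri (u : R) := asin (sin u).

Lemma pm1 : forall S : nat, (-1)^S = 1 \/ (-1)^S = -1.
Proof. induction S as [|S IH]; simpl; [auto|]. destruct IH as [-> | ->]; [right|left]; ring. Qed.

Lemma pm1_even : forall S : nat, (-1)^S = if Nat.even S then 1 else -1.
Proof.
  induction S as [|S IH]; [simpl; auto|].
  change ((-1)^(Datatypes.S S)) with (-1 * (-1)^S).
  rewrite IH, Nat.even_succ, <- Nat.negb_even. destruct (Nat.even S); simpl; ring.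
Qed.

Lemma sin_shift : forall (S : nat) x, sin (x + INR S * PI) = (-1)^S * sin x.
Proof.
  induction S as [|S IH]; intros x.
  - simpl. rewrite Rmult_0_l, Rplus_0_r; ring.
  - rewrite S_INR. replace (x + (INR S + 1) * PI) with ((x + INR S * PI) + PI) by ring.
    rewrite neg_sin, IH. simpl; ring.
Qed.

Lemma tri_slab : forall (S : nat) u, - (PI/2) + INR S * PI <= u <= PI/2 + INR S * PI ->
  tri u = (-1)^S * (u - INR S * PI).
Proof.
  intros S u Hu. unfold tri.
  replace u with ((u - INR S * PI) + INR S * PI) at 1 by ring.
  rewrite sin_shift. destruct (pm1 S) as [-> | ->].
  - rewrite Rmult_1_l, asin_sin by lra. ring.
  - replace (-1 * sin (u - INR S * PI)) with (- sin (u - INR S * PI)) by ring.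
    rewrite asin_opp, asin_sin by lra. ring.
Qed.

Lemma tri_bound : forall u, - (PI/2) <= tri u <= PI/2.
Proof. intros; apply asin_bound. Qed.

Definition tt (k : nat) := - (PI/2) + INR k * PI.

Lemma pl_tri : forall n tau (traj : nat -> R -> R),
  (forall s, exists p q, forall u, traj s u = p * tri u + q) -> piecewise_linear n tau tt traj.
Proof.
  intros n tau traj H. split.
  - intros k _. unfold tt. rewrite S_INR. pose proof PI_RGT_0. lra.
  - intros s k _ _. destruct (H s) as [p [q Hpq]].
    exists (p * (-1)^k), (q - p * (-1)^k * INR k * PI). intros u Hu.
    rewrite Hpq, (tri_slab k u). { ring. }
    unfold tt in Hu. rewrite S_INR in Hu. lra.
Qed.

Lemma eps_of_bound : forall n tau (traj : nat -> R -> R) Bd,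
  (forall s u, (s < n)%nat -> Rabs (traj s u) <= Bd) ->
  forall s p u, (s < n)%nat -> (p < n)%nat -> tt 0%nat <= u <= tt tau ->
     Rabs (traj s u - traj p u) <= 2 * Bd.
Proof.
  intros n tau traj Bd H s p u Hs Hp _.
  pose proof (H s u Hs). pose proof (H p u Hp). revert H0 H1.
  unfold Rabs; repeat destruct Rcase_abs; intros; lra.
Qed.

Lemma count_small : forall n traj (s : nat -> R) m (q : nat -> R) (a : nat -> nat) K,
  (forall j, (j < K)%nat -> s 0%nat <= q j < s m) ->
  (forall j, (S j < K)%nat -> q j < q (S j)) ->
  (forall j, (S j < K)%nat -> a j <> a (S j)) ->
  (forall j, (j < K)%nat -> uarg n traj (q j) (a j)) ->
  (forall u a, s 0%nat <= u < s m -> uarg n traj u a -> exists i, InPiece s m u i) ->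
  (forall u u' a a' i i', u < u' -> uarg n traj u a -> uarg n traj u' a' -> a <> a' ->
     InPiece s m u i -> InPiece s m u' i' -> (i < i')%nat) ->
  (K <= m)%nat.
Proof.
  intros n traj s m q a K Hq Hinc Hne Hu Hex Hord.
  destruct K as [|K]; [lia|].
  assert (C : forall j, (j <= K)%nat -> exists i, InPiece s m (q j) i /\ (j <= i)%nat).
  { induction j as [|j IH]; intros Hj.
    - destruct (Hex (q 0%nat) (a 0%nat) (Hq 0%nat ltac:(lia)) (Hu 0%nat ltac:(lia))) as [i Hi].
      exists i; split; auto; lia.
    - destruct (IH ltac:(lia)) as [i [Hi Hji]].
      destruct (Hex (q (S j)) (a (S j)) (Hq (S j) ltac:(lia)) (Hu (S j) ltac:(lia))) as [i' Hi'].
      exists i'; split; auto.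
      pose proof (Hord _ _ _ _ _ _ (Hinc j ltac:(lia)) (Hu j ltac:(lia)) (Hu (S j) ltac:(lia))
        (Hne j ltac:(lia)) Hi Hi'). lia. }
  destruct (C K ltac:(lia)) as [i [[Hi _] HK]]. lia.
Qed.

Definition trajS (s : nat) (u : R) : R :=
  if Nat.eqb s 0 then tri u else if Nat.eqb s 1 then - tri u else 10.

Lemma small_design : forall n tau, (3 <= n)%nat -> (1 <= tau)%nat ->
  GHyp n tau 20 tt trajS /\
  forall T m s ent, central 20 n trajS (tt 0%nat) (tt tau) T ->
  s 0%nat = tt 0%nat -> s m = tt tau ->
  (forall i, (i < m)%nat -> s i < s (S i)) ->
  (forall i, (i < m)%nat -> forall u, s i < u < s (S i) -> T u = ent i) ->
  (tau <= m)%nat.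
Proof.
  intros n tau Hn Htau. pose proof PI_RGT_0 as Hpi. pose proof PI_4 as Hpi4.
  assert (G : GHyp n tau 20 tt trajS).
  { split; [lia|]. split; [lia|]. split.
    - apply pl_tri. intros s. unfold trajS.
      destruct (Nat.eqb s 0); [exists 1, 0; intros; ring|].
      destruct (Nat.eqb s 1); [exists (-1), 0; intros; ring|]. exists 0, 10; intros; ring.
    - replace 20 with (2 * 10) by ring. apply eps_of_bound. intros s u _.
      pose proof (tri_bound u). unfold trajS.
      destruct (Nat.eqb s 0); [|destruct (Nat.eqb s 1)]; unfold Rabs; destruct Rcase_abs; lra. }
  split; auto.
  intros T m s ent HC Hs0 Hsm Hs HT.
  destruct (Gfinal n tau 20 tt trajS T m s ent G HC Hs0 Hsm Hs HT) as [Hex Hord].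
  set (q := fun j : nat => PI/4 + INR j * PI).
  set (a := fun j : nat => if Nat.even j then 0%nat else 1%nat).
  apply (count_small n trajS s m q a tau); auto.
  - intros j Hj. rewrite Hs0, Hsm. unfold q, tt.
    assert (INR j + 1 <= INR tau) by (rewrite <- S_INR; apply le_INR; lia).
    pose proof (pos_INR j). rewrite INR_0.
    assert (INR j * PI <= (INR tau - 1) * PI) by (apply Rmult_le_compat_r; lra).
    assert (0 <= INR j * PI) by (apply Rmult_le_pos; lra). lra.
  - intros j _. unfold q. rewrite S_INR. lra.
  - intros j _. unfold a. rewrite Nat.even_succ, <- Nat.negb_even. destruct (Nat.even j); simpl; lia.
  - intros j _.
    assert (Ht : tri (q j) = (-1)^j * (PI/4)).
    { rewrite (tri_slab j); unfold q; [f_equal; ring| lra]. }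
    rewrite pm1_even in Ht. unfold a.
    destruct (Nat.even j).
    + apply (uarg_crit n trajS (q j) 0 (10 - PI/4)); [lia| |].
      * intros p _. unfold trajS. simpl. rewrite Ht.
        destruct p as [|[|p]]; simpl; unfold Rabs; destruct Rcase_abs; lra.
      * intros s' Hs' Hne. destruct s' as [|[|s']]; [lia| |].
        -- exists 2%nat; split; [lia|]. unfold trajS; simpl; rewrite Ht.
           unfold Rabs; destruct Rcase_abs; lra.
        -- exists 1%nat; split; [lia|]. unfold trajS; simpl; rewrite Ht.
           unfold Rabs; destruct Rcase_abs; lra.
    + apply (uarg_crit n trajS (q j) 1 (10 - PI/4)); [lia| |].
      * intros p _. unfold trajS. simpl. rewrite Ht.
        destruct p as [|[|p]]; simpl; unfold Rabs; destruct Rcase_abs; lra.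
      * intros s' Hs' Hne. destruct s' as [|[|s']]; [| lia|].
        -- exists 2%nat; split; [lia|]. unfold trajS; simpl; rewrite Ht.
           unfold Rabs; destruct Rcase_abs; lra.
        -- exists 0%nat; split; [lia|]. unfold trajS; simpl; rewrite Ht.
           unfold Rabs; destruct Rcase_abs; lra.
  - rewrite Hs0, Hsm; auto.
Qed.

Lemma count2 : forall n traj (s : nat -> R) m (q : nat -> nat -> R) (a : nat -> nat -> nat) Gm k,
  (1 <= k)%nat ->
  (forall G r, (G < Gm)%nat -> (r < k)%nat -> s 0%nat <= q G r < s m /\ uarg n traj (q G r) (a G r)) ->
  (forall G r, (G < Gm)%nat -> (S r < k)%nat -> q G r < q G (S r) /\ a G r <> a G (S r)) ->
  (forall G, (S G < Gm)%nat -> q G (k - 1)%nat < q (S G) 0%nat /\ a G (k - 1)%nat <> a (S G) 0%nat) ->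
  (forall u a, s 0%nat <= u < s m -> uarg n traj u a -> exists i, InPiece s m u i) ->
  (forall u u' a a' i i', u < u' -> uarg n traj u a -> uarg n traj u' a' -> a <> a' ->
     InPiece s m u i -> InPiece s m u' i' -> (i < i')%nat) ->
  (Gm * k <= m)%nat.
Proof.
  intros n traj s m q a Gm k Hk Hq Hin Hout Hex Hord.
  destruct Gm as [|Gm]; [lia|].
  assert (C : forall G, (G <= Gm)%nat -> forall r, (r < k)%nat ->
     exists i, InPiece s m (q G r) i /\ (G * k + r <= i)%nat).
  { induction G as [|G IHG]; intros HG r Hr; induction r as [|r IHr].
    - destruct (Hq 0%nat 0%nat ltac:(lia) ltac:(lia)) as [H1 H2].
      destruct (Hex _ _ H1 H2) as [i Hi]; exists i; split; auto; lia.
    - destruct (IHr ltac:(lia)) as [i [Hi Hle]].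
      destruct (Hq 0%nat (S r) ltac:(lia) ltac:(lia)) as [H1 H2].
      destruct (Hex _ _ H1 H2) as [i' Hi']. exists i'; split; auto.
      destruct (Hin 0%nat r ltac:(lia) ltac:(lia)) as [Hl Hn].
      pose proof (Hord _ _ _ _ _ _ Hl (proj2 (Hq 0%nat r ltac:(lia) ltac:(lia))) H2 Hn Hi Hi'). lia.
    - destruct (IHG ltac:(lia) (k-1)%nat ltac:(lia)) as [i [Hi Hle]].
      destruct (Hq (S G) 0%nat ltac:(lia) ltac:(lia)) as [H1 H2].
      destruct (Hex _ _ H1 H2) as [i' Hi']. exists i'; split; auto.
      destruct (Hout G ltac:(lia)) as [Hl Hn].
      pose proof (Hord _ _ _ _ _ _ Hl (proj2 (Hq G (k-1)%nat ltac:(lia) ltac:(lia))) H2 Hn Hi Hi').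
      nia.
    - destruct (IHr ltac:(lia)) as [i [Hi Hle]].
      destruct (Hq (S G) (S r) ltac:(lia) ltac:(lia)) as [H1 H2].
      destruct (Hex _ _ H1 H2) as [i' Hi']. exists i'; split; auto.
      destruct (Hin (S G) r ltac:(lia) ltac:(lia)) as [Hl Hn].
      pose proof (Hord _ _ _ _ _ _ Hl (proj2 (Hq (S G) r ltac:(lia) ltac:(lia))) H2 Hn Hi Hi'). lia. }
  destruct (C Gm ltac:(lia) (k-1)%nat ltac:(lia)) as [i [[Hi _] Hle]]. nia.
Qed.

Definition Hh (k : nat) := 3 * INR k ^ 2 + 3.
Definition bv (k s : nat) := INR s - INR k - 1/2.
Definition dn (k s : nat) : nat := if (s <=? 3 * k)%nat then (2 * (s - 2 * k))%nat
   else (2 * k + 3 - 2 * (s - 3 * k))%nat.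
Definition dv (k s : nat) := INR (dn k s) / (4 * (INR k + 1)).
Definition pv (k s : nat) := 1/8 - dv k s / 2.
Definition Ac (k s : nat) := if (s <=? k)%nat then 2 * INR s
   else if (s <=? 2 * k)%nat then -2 * bv k s else 0.
Definition Bc (k s : nat) := if (s <=? k)%nat then Hh k - INR s ^ 2
   else if (s <=? 2 * k)%nat then - Hh k + bv k s ^ 2
   else if (s <=? 4 * k)%nat then pv k s else Hh k.
Definition Xp k s v := Ac k s * v + Bc k s.
Definition vl (k : nat) u := (tri u + PI/2) * INR k / PI.
Definition trajB (k : nat) (s : nat) (u : R) := Xp k s (vl k u).

Lemma leb_t : forall a b, (a <= b)%nat -> (a <=? b)%nat = true.
Proof. intros; apply Nat.leb_le; auto. Qed.
Lemma leb_f : forall a b, (b < a)%nat -> (a <=? b)%nat = false.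
Proof. intros; apply Nat.leb_gt; auto. Qed.

Lemma Xp_top : forall k s v, (s <= k)%nat -> Xp k s v = Hh k + v^2 - (v - INR s)^2.
Proof. intros; unfold Xp, Ac, Bc; rewrite leb_t by lia; ring. Qed.
Lemma Xp_bot : forall k s v, (k < s <= 2 * k)%nat -> Xp k s v = - Hh k - v^2 + (v - bv k s)^2.
Proof. intros; unfold Xp, Ac, Bc; rewrite leb_f, leb_t by lia; ring. Qed.
Lemma Xp_st : forall k s v, (2 * k < s <= 4 * k)%nat -> Xp k s v = pv k s.
Proof. intros; unfold Xp, Ac, Bc; rewrite leb_f, leb_f, leb_t by lia; ring. Qed.
Lemma Xp_else : forall k s v, (4 * k < s)%nat -> Xp k s v = Hh k.
Proof. intros; unfold Xp, Ac, Bc; rewrite leb_f, leb_f, leb_f by lia; ring. Qed.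

Lemma dn_range : forall k s, (2 * k < s <= 4 * k)%nat -> (2 <= dn k s <= 2 * k + 1)%nat.
Proof. intros k s H; unfold dn; destruct (Nat.leb_spec s (3 * k)); lia. Qed.
Lemma dn_inj : forall k s s', (2 * k < s <= 4 * k)%nat -> (2 * k < s' <= 4 * k)%nat ->
  dn k s = dn k s' -> s = s'.
Proof. intros k s s' H H'; unfold dn; destruct (Nat.leb_spec s (3 * k));
  destruct (Nat.leb_spec s' (3 * k)); lia. Qed.

Lemma INR_pos1 : forall k, 0 < INR k + 1.
Proof. intros; pose proof (pos_INR k); lra. Qed.

Lemma dv_range : forall k s, (2 * k < s <= 4 * k)%nat -> 0 < dv k s < 1/2.
Proof.
  intros k s H. pose proof (dn_range k s H) as [H1 H2]. unfold dv.
  pose proof (INR_pos1 k).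
  assert (2 <= INR (dn k s)) by (replace 2 with (INR 2) by (simpl; ring); apply le_INR; auto).
  assert (INR (dn k s) <= 2 * INR k + 1).
  { replace (2 * INR k + 1) with (INR (2 * k + 1)) by (rewrite plus_INR, mult_INR; simpl; ring).
    apply le_INR; auto. }
  split.
  - apply Rdiv_lt_0_compat; lra.
  - apply Rmult_lt_reg_r with (4 * (INR k + 1)); [lra|].
    unfold Rdiv; rewrite Rmult_assoc, Rinv_l by lra. lra.
Qed.

Lemma dv_inj : forall k s s', (2 * k < s <= 4 * k)%nat -> (2 * k < s' <= 4 * k)%nat ->
  s <> s' -> dv k s <> dv k s'.
Proof.
  intros k s s' H H' Hne E. apply Hne. apply (dn_inj k); auto.
  apply INR_eq. unfold dv in E. pose proof (INR_pos1 k).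
  apply Rmult_eq_reg_r with (/ (4 * (INR k + 1))); [exact E|].
  apply Rinv_neq_0_compat; lra.
Qed.


Lemma nat_dist : forall a b : nat, a <> b -> 1 <= Rabs (INR a - INR b).
Proof.
  intros a b H. destruct (Nat.lt_total a b) as [h|[h|h]]; [| contradiction |].
  - assert (INR (S a) <= INR b) by (apply le_INR; lia). rewrite S_INR in H0.
    unfold Rabs; destruct Rcase_abs; lra.
  - assert (INR (S b) <= INR a) by (apply le_INR; lia). rewrite S_INR in H0.
    unfold Rabs; destruct Rcase_abs; lra.
Qed.

Lemma sq_ge : forall a x, 0 <= a -> a <= Rabs x -> a ^ 2 <= x ^ 2.
Proof. intros a x H1 H2. revert H2; unfold Rabs; destruct Rcase_abs; intros; nra. Qed.
Lemma sq_eq : forall a x, Rabs x = a -> x ^ 2 = a ^ 2.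
Proof. intros a x H; rewrite <- H; unfold Rabs; destruct Rcase_abs; ring. Qed.

Lemma vl_range : forall k u, 0 <= vl k u <= INR k.
Proof.
  intros k u. unfold vl. pose proof (tri_bound u). pose proof PI_RGT_0. pose proof (pos_INR k).
  split.
  - apply Rmult_le_pos; [apply Rmult_le_pos; lra| left; apply Rinv_0_lt_compat; lra].
  - unfold Rdiv. replace (INR k) with (PI * INR k * / PI) at 2 by (field; lra).
    apply Rmult_le_compat_r; [left; apply Rinv_0_lt_compat; lra|].
    apply Rmult_le_compat_r; lra.
Qed.

Lemma loc_uarg : forall n k u s0 st sb, (4 * k < n)%nat -> (1 <= k)%nat ->
  (2 * k < s0 <= 4 * k)%nat -> (st <= k)%nat -> (k < sb <= 2 * k)%nat ->
  Rabs (vl k u - INR st) = dv k s0 -> Rabs (vl k u - bv k sb) = 1/2 - dv k s0 ->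
  uarg n (trajB k) u s0.
Proof.
  intros n k u s0 st sb Hn Hk Hs0 Hst Hsb Et Eb.
  pose proof (vl_range k u) as Hv. pose proof (dv_range k s0 Hs0) as Hd.
  unfold trajB.
  set (v := vl k u) in *. set (d := dv k s0) in *.
  assert (HK : 1 <= INR k) by (replace 1 with (INR 1) by reflexivity; apply le_INR; auto).
  set (K := INR k) in *.
  assert (HH : Hh k = 3 * K ^ 2 + 3) by reflexivity.
  assert (F1 : forall s, (s <= k)%nat -> d ^ 2 <= (v - INR s) ^ 2).
  { intros s Hs. destruct (Nat.eq_dec s st) as [->|Hne].
    - rewrite (sq_eq d _ Et); lra.
    - apply sq_ge; [lra|]. pose proof (nat_dist s st Hne) as ND. revert ND Et.
      unfold Rabs; repeat destruct Rcase_abs; intros; lra. }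
  assert (F2 : forall s, (k < s <= 2 * k)%nat -> (1/2 - d) ^ 2 <= (v - bv k s) ^ 2).
  { intros s Hs. destruct (Nat.eq_dec s sb) as [->|Hne].
    - rewrite (sq_eq _ _ Eb); lra.
    - apply sq_ge; [lra|]. pose proof (nat_dist s sb Hne) as ND. revert ND Eb. unfold bv.
      unfold Rabs; repeat destruct Rcase_abs; intros; lra. }
  assert (Ftop : forall s, (s <= k)%nat -> (v - INR s) ^ 2 <= K ^ 2).
  { intros s Hs. assert (INR s <= K) as B1 by (apply le_INR; auto). pose proof (pos_INR s). nra. }
  assert (Fbot : forall s, (k < s <= 2 * k)%nat -> (v - bv k s) ^ 2 <= K ^ 2).
  { intros s Hs. assert (B1 : INR (S k) <= INR s) by (apply le_INR; lia). rewrite S_INR in B1.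
    assert (B2 : INR s <= INR (2 * k)) by (apply le_INR; lia). rewrite mult_INR in B2.
    simpl in B2. unfold bv. fold K in B1, B2 |- *. nra. }
  assert (Hv2 : 0 <= v ^ 2 <= K ^ 2) by nra.
  assert (Hd2 : 0 <= d ^ 2 <= 1/4) by nra.
  assert (Hq2 : 0 <= (1/2 - d) ^ 2 <= 1/4) by nra.
  assert (HK2 : 1 <= K ^ 2) by nra.
  set (U := Hh k + v ^ 2 - d ^ 2). set (L := - Hh k - v ^ 2 + (1/2 - d) ^ 2).
  assert (Hvd : d ^ 2 <= v ^ 2) by (pose proof (F1 0%nat ltac:(lia)) as F0; simpl INR in F0;
     rewrite Rminus_0_r in F0; exact F0).
  assert (Hm : pv k s0 = (U + L) / 2) by (unfold pv, U, L; fold d; field).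
  assert (Hpv : forall s, (2 * k < s <= 4 * k)%nat -> -1/8 < pv k s < 1/8).
  { intros s Hs. pose proof (dv_range k s Hs). unfold pv; lra. }
  assert (Hr : forall p, L <= Xp k p v <= U).
  { intros p. destruct (le_lt_dec p k) as [h1|h1].
    - rewrite Xp_top by auto. pose proof (F1 p h1). pose proof (Ftop p h1). unfold U, L; nra.
    - destruct (le_lt_dec p (2 * k)) as [h2|h2].
      + rewrite Xp_bot by lia. pose proof (F2 p ltac:(lia)). pose proof (Fbot p ltac:(lia)).
        unfold U, L; nra.
      + destruct (le_lt_dec p (4 * k)) as [h3|h3].
        * rewrite Xp_st by lia. pose proof (Hpv p ltac:(lia)). unfold U, L; nra.
        * rewrite Xp_else by lia. unfold U, L; nra. }
  assert (XU : Xp k st v = U) by (rewrite Xp_top by auto; rewrite (sq_eq _ _ Et); reflexivity).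
  assert (XL : Xp k sb v = L) by (rewrite Xp_bot by auto; rewrite (sq_eq _ _ Eb); reflexivity).
  assert (HB : (U - L) / 2 <= Hh k + K ^ 2) by (unfold U, L; nra).
  assert (HLv : L <= - Hh k + 1/4) by (unfold L; lra).
  assert (HUv : Hh k <= U) by (unfold U; lra).
  apply (uarg_crit n (fun s u => Xp k s (vl k u)) u s0 ((U - L) / 2)); [lia| |].
  - intros p Hp. simpl. fold v. rewrite (Xp_st k s0 v Hs0), Hm. pose proof (Hr p).
    unfold Rabs; destruct Rcase_abs; lra.
  - intros s Hs Hne. simpl; fold v.
    destruct (le_lt_dec s k) as [h1|h1].
    + exists sb; split; [lia|]. rewrite XL, Xp_top by auto. pose proof (Ftop s h1).
      eapply Rlt_le_trans; [|apply Rle_abs]. lra.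
    + destruct (le_lt_dec s (2 * k)) as [h2|h2].
      * exists st; split; [lia|]. rewrite XU, Xp_bot by lia. pose proof (Fbot s ltac:(lia)).
        rewrite Rabs_minus_sym. eapply Rlt_le_trans; [|apply Rle_abs]. lra.
      * destruct (le_lt_dec s (4 * k)) as [h3|h3].
        -- rewrite Xp_st by lia.
           assert (Hdne : dv k s <> d) by (apply dv_inj; auto; lia).
           destruct (Rlt_dec (pv k s) (pv k s0)) as [hl|hl].
           ++ exists st; split; [lia|]. rewrite XU. rewrite Rabs_minus_sym.
              eapply Rlt_le_trans; [|apply Rle_abs]. lra.
           ++ assert (pv k s <> pv k s0) by (unfold pv; fold d; lra).
              exists sb; split; [lia|]. rewrite XL.
              eapply Rlt_le_trans; [|apply Rle_abs]. lra.
        -- exists sb; split; [lia|]. rewrite XL, Xp_else by lia.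
           eapply Rlt_le_trans; [|apply Rle_abs]. lra.
Qed.

Definition lam (k G r : nat) := if Nat.even G then (INR r + 1) / (INR k + 1)
  else (2 * INR r + 1) / (2 * (INR k + 1)).
Definition wd (k G r : nat) : nat := if Nat.even G then (2 * k + 1 + r)%nat else (3 * k + 1 + r)%nat.
Definition qB (k G r : nat) := - (PI/2) + (INR G + lam k G r) * PI / (2 * INR k).

Lemma frac01 : forall a b, 0 < a -> a < b -> 0 < a / b < 1.
Proof.
  intros a b H1 H2. split; [apply Rdiv_lt_0_compat; lra|].
  apply Rmult_lt_reg_r with b; [lra|]. unfold Rdiv; rewrite Rmult_assoc, Rinv_l by lra; lra.
Qed.

Lemma lam_range : forall k G r, (r < k)%nat -> 0 < lam k G r < 1.
Proof.
  intros k G r H. assert (INR r + 1 <= INR k) by (rewrite <- S_INR; apply le_INR; lia).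
  pose proof (pos_INR r). unfold lam; destruct (Nat.even G); apply frac01; lra.
Qed.

Lemma lam_mono : forall k G r, lam k G r < lam k G (S r).
Proof.
  intros k G r. pose proof (pos_INR k). unfold lam; rewrite S_INR.
  destruct (Nat.even G); unfold Rdiv; apply Rmult_lt_compat_r;
  try (apply Rinv_0_lt_compat; lra); lra.
Qed.

Lemma dv_wd : forall k G r, (r < k)%nat ->
  dv k (wd k G r) = if Nat.even G then lam k G r / 2 else (1 - lam k G r) / 2.
Proof.
  intros k G r Hr. pose proof (INR_pos1 k). unfold dv, lam, wd.
  destruct (Nat.even G).
  - assert (E : dn k (2 * k + 1 + r) = (2 * r + 2)%nat) by (unfold dn; rewrite leb_t by lia; lia).
    rewrite E, plus_INR, mult_INR. simpl. field. lra.
  - assert (E : (dn k (3 * k + 1 + r) + 2 * r = 2 * k + 1)%nat) by (unfold dn; rewrite leb_f by lia; lia).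
    assert (E2 : INR (dn k (3 * k + 1 + r)) = 2 * INR k + 1 - 2 * INR r).
    { apply (f_equal INR) in E. rewrite !plus_INR, !mult_INR in E.
      replace (INR 2) with 2 in E by (simpl; ring). replace (INR 1) with 1 in E by reflexivity. lra. }
    rewrite E2. field. lra.
Qed.

Lemma wd_range : forall k G r, (r < k)%nat -> (2 * k < wd k G r <= 4 * k)%nat.
Proof. intros; unfold wd; destruct (Nat.even G); lia. Qed.

Lemma even_2kS : forall k S h, Nat.even (2 * k * S + h) = Nat.even h.
Proof.
  intros. rewrite Nat.even_add, <- Nat.mul_assoc, Nat.even_mul. simpl.
  destruct (Nat.even h); reflexivity.
Qed.

Lemma Rabs_id : forall x, 0 <= x -> Rabs x = x.
Proof. intros; apply Rabs_right; lra. Qed.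
Lemma Rabs_opp_id : forall x, 0 <= x -> Rabs (- x) = x.
Proof. intros; rewrite Rabs_Ropp; apply Rabs_right; lra. Qed.

Lemma sample_uarg : forall n k tau G r, (4 * k < n)%nat -> (1 <= k)%nat ->
  (G < 2 * k * tau)%nat -> (r < k)%nat -> uarg n (trajB k) (qB k G r) (wd k G r).
Proof.
  intros n k tau G r Hn Hk HG Hr.
  pose proof PI_RGT_0 as Hpi.
  assert (HK : 1 <= INR k) by (replace 1 with (INR 1) by reflexivity; apply le_INR; auto).
  pose proof (lam_range k G r Hr) as Hl.
  pose proof (dv_wd k G r Hr) as Hdv.
  pose proof (wd_range k G r Hr) as Hwr.
  assert (Hk2 : (2 * k <> 0)%nat) by lia.
  pose proof (Nat.div_mod G (2 * k) Hk2) as HGd.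
  pose proof (Nat.mod_upper_bound G (2 * k) Hk2) as Hh.
  set (S := (G / (2 * k))%nat) in *. set (h := (G mod (2 * k))%nat) in *.
  assert (Hev : Nat.even G = Nat.even h) by (rewrite HGd; apply even_2kS).
  assert (HGR : INR G = 2 * INR k * INR S + INR h).
  { rewrite HGd at 1. rewrite plus_INR, !mult_INR. simpl. ring. }
  set (l := lam k G r) in *.
  assert (Hh2 : INR h + 1 <= 2 * INR k).
  { replace (2 * INR k) with (INR (2 * k)) by (rewrite mult_INR; simpl; ring).
    rewrite <- S_INR; apply le_INR; lia. }
  assert (Hq : qB k G r = - (PI/2) + INR S * PI + (INR h + l) * PI / (2 * INR k)).
  { unfold qB. fold l. rewrite HGR. field. lra. }
  assert (Hslab : - (PI/2) + INR S * PI <= qB k G r <= PI/2 + INR S * PI).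
  { rewrite Hq. pose proof (pos_INR h).
    assert (0 <= (INR h + l) * PI / (2 * INR k) <= PI).
    { split. apply Rmult_le_pos; [apply Rmult_le_pos; lra| left; apply Rinv_0_lt_compat; lra].
      unfold Rdiv. apply Rle_trans with ((2 * INR k) * PI * / (2 * INR k)).
      - apply Rmult_le_compat_r; [left; apply Rinv_0_lt_compat; lra|]. apply Rmult_le_compat_r; lra.
      - right; field; lra. }
    lra. }
  pose proof (tri_slab S (qB k G r) Hslab) as Ht.
  assert (Hv : vl k (qB k G r) = if Nat.even S then (INR h + l) / 2 else INR k - (INR h + l) / 2).
  { unfold vl. rewrite Ht, pm1_even, Hq. destruct (Nat.even S); field; lra. }
  destruct (Nat.Even_or_Odd h) as [[j Hj] | [j Hj]].
  -
    assert (He : Nat.even h = true) by (apply Nat.even_spec; exists j; auto).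
    rewrite Hev, He in Hdv. unfold wd in *. rewrite Hev, He in *.
    assert (Hjk : (j < k)%nat) by lia.
    assert (HjR : INR h = 2 * INR j) by (rewrite Hj, mult_INR; reflexivity).
    destruct (Nat.even S) eqn:ES.
    + apply (loc_uarg n k _ _ j (k + 1 + j)); try lia.
      * rewrite Hv, Hdv, HjR. replace ((2 * INR j + l) / 2 - INR j) with (l/2) by field.
        apply Rabs_id; lra.
      * rewrite Hv, Hdv, HjR. unfold bv. rewrite !plus_INR. simpl.
        replace ((2 * INR j + l) / 2 - (INR k + 1 + INR j - INR k - 1 / 2)) with (- (1/2 - l/2)) by field.
        rewrite Rabs_opp_id; lra.
    + apply (loc_uarg n k _ _ (k - j) (2 * k - j)); try lia.
      * rewrite Hv, Hdv, HjR, minus_INR by lia.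
        replace (INR k - (2 * INR j + l) / 2 - (INR k - INR j)) with (- (l/2)) by field.
        rewrite Rabs_opp_id; lra.
      * rewrite Hv, Hdv, HjR. unfold bv. rewrite minus_INR, mult_INR by lia. simpl.
        replace (INR k - (2 * INR j + l) / 2 - ((1 + 1) * INR k - INR j - INR k - 1 / 2))
          with (1/2 - l/2) by field.
        apply Rabs_id; lra.
  -
    assert (He : Nat.even h = false).
    { rewrite <- Nat.negb_odd. apply Bool.negb_false_iff. apply Nat.odd_spec; exists j; auto. }
    rewrite Hev, He in Hdv. unfold wd in *. rewrite Hev, He in *.
    assert (Hjk : (j < k)%nat) by lia.
    assert (HjR : INR h = 2 * INR j + 1) by (rewrite Hj, plus_INR, mult_INR; reflexivity).
    destruct (Nat.even S) eqn:ES.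
    + apply (loc_uarg n k _ _ (j + 1) (k + 1 + j)); try lia.
      * rewrite Hv, Hdv, HjR, plus_INR. simpl.
        replace ((2 * INR j + 1 + l) / 2 - (INR j + 1)) with (- ((1 - l)/2)) by field.
        rewrite Rabs_opp_id; lra.
      * rewrite Hv, Hdv, HjR. unfold bv. rewrite !plus_INR. simpl.
        replace ((2 * INR j + 1 + l) / 2 - (INR k + 1 + INR j - INR k - 1 / 2)) with (1/2 - (1 - l)/2) by field.
        apply Rabs_id; lra.
    + apply (loc_uarg n k _ _ (k - j - 1) (2 * k - j)); try lia.
      * rewrite Hv, Hdv, HjR, !minus_INR by lia. simpl.
        replace (INR k - (2 * INR j + 1 + l) / 2 - (INR k - INR j - 1)) with ((1 - l)/2) by field.
        apply Rabs_id; lra.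
      * rewrite Hv, Hdv, HjR. unfold bv. rewrite minus_INR, mult_INR by lia. simpl.
        replace (INR k - (2 * INR j + 1 + l) / 2 - ((1 + 1) * INR k - INR j - INR k - 1 / 2))
          with (- (1/2 - (1 - l)/2)) by field.
        rewrite Rabs_opp_id; lra.
Qed.

Lemma Xp_bound : forall k s v, 0 <= v <= INR k -> Rabs (Xp k s v) <= Hh k + INR k ^ 2 + 1.
Proof.
  intros k s v Hv. pose proof (pos_INR k).
  assert (HH : Hh k = 3 * INR k ^ 2 + 3) by reflexivity.
  assert (0 <= INR k ^ 2) by nra.
  destruct (le_lt_dec s k) as [h1|h1].
  - rewrite Xp_top by auto. assert (INR s <= INR k) by (apply le_INR; auto).
    pose proof (pos_INR s). assert ((v - INR s)^2 <= INR k ^ 2) by nra.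
    assert (0 <= v ^ 2 <= INR k ^ 2) by nra. pose proof (pow2_ge_0 (v - INR s)).
    unfold Rabs; destruct Rcase_abs; lra.
  - destruct (le_lt_dec s (2 * k)) as [h2|h2].
    + rewrite Xp_bot by lia.
      assert (B1 : INR (S k) <= INR s) by (apply le_INR; lia). rewrite S_INR in B1.
      assert (B2 : INR s <= INR (2 * k)) by (apply le_INR; lia). rewrite mult_INR in B2.
      simpl in B2. assert (- INR k <= v - bv k s <= INR k) by (unfold bv; lra).
      assert ((v - bv k s)^2 <= INR k ^ 2) by nra.
      assert (0 <= v ^ 2 <= INR k ^ 2) by nra. pose proof (pow2_ge_0 (v - bv k s)).
      unfold Rabs; destruct Rcase_abs; lra.
    + destruct (le_lt_dec s (4 * k)) as [h3|h3].
      * rewrite Xp_st by lia. pose proof (dv_range k s ltac:(lia)). unfold pv.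
        unfold Rabs; destruct Rcase_abs; lra.
      * rewrite Xp_else by lia. unfold Rabs; destruct Rcase_abs; lra.
Qed.

Lemma big_design : forall n tau, (5 <= n)%nat -> (1 <= tau)%nat ->
  let k := ((n - 1) / 4)%nat in
  GHyp n tau (2 * (Hh k + INR k ^ 2 + 1)) tt (trajB k) /\
  forall T m s ent, central (2 * (Hh k + INR k ^ 2 + 1)) n (trajB k) (tt 0%nat) (tt tau) T ->
  s 0%nat = tt 0%nat -> s m = tt tau ->
  (forall i, (i < m)%nat -> s i < s (S i)) ->
  (forall i, (i < m)%nat -> forall u, s i < u < s (S i) -> T u = ent i) ->
  (2 * k * tau * k <= m)%nat.
Proof.
  intros n tau Hn Htau k. pose proof PI_RGT_0 as Hpi.
  assert (Hk : (1 <= k /\ 4 * k < n)%nat).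
  { unfold k. pose proof (Nat.div_mod (n - 1) 4 ltac:(lia)).
    pose proof (Nat.mod_upper_bound (n - 1) 4 ltac:(lia)). lia. }
  assert (HK : 1 <= INR k) by (replace 1 with (INR 1) by reflexivity; apply le_INR; lia).
  assert (G : GHyp n tau (2 * (Hh k + INR k ^ 2 + 1)) tt (trajB k)).
  { split; [lia|]. split; [lia|]. split.
    - apply pl_tri. intros s. exists (Ac k s * INR k / PI), (Ac k s * INR k / 2 + Bc k s).
      intros u. unfold trajB, Xp, vl. field. lra.
    - apply eps_of_bound. intros s u _. unfold trajB. apply Xp_bound. apply vl_range. }
  split; auto.
  intros T m s ent HC Hs0 Hsm Hs HT.
  destruct (Gfinal n tau _ tt (trajB k) T m s ent G HC Hs0 Hsm Hs HT) as [Hex Hord].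
  apply (count2 n (trajB k) s m (qB k) (wd k) (2 * k * tau) k); try lia.
  - intros Gi r HG Hr. split.
    + rewrite Hs0, Hsm. unfold tt, qB. pose proof (lam_range k Gi r Hr).
      assert (INR Gi + 1 <= 2 * INR k * INR tau).
      { replace (2 * INR k * INR tau) with (INR (2 * k * tau)) by (rewrite !mult_INR; reflexivity).
        rewrite <- S_INR. apply le_INR; lia. }
      pose proof (pos_INR Gi). rewrite INR_0.
      assert (0 <= (INR Gi + lam k Gi r) * PI / (2 * INR k)).
      { apply Rmult_le_pos; [apply Rmult_le_pos; lra| left; apply Rinv_0_lt_compat; lra]. }
      assert ((INR Gi + lam k Gi r) * PI / (2 * INR k) < INR tau * PI).
      { apply Rmult_lt_reg_r with (2 * INR k); [lra|]. unfold Rdiv.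
        rewrite Rmult_assoc, Rinv_l by lra. nra. }
      lra.
    + apply (sample_uarg n k tau); lia.
  - intros Gi r HG Hr. split.
    + unfold qB. pose proof (lam_mono k Gi r). unfold Rdiv. apply Rplus_lt_compat_l.
      apply Rmult_lt_compat_r; [apply Rinv_0_lt_compat; lra|]. apply Rmult_lt_compat_r; lra.
    + unfold wd; destruct (Nat.even Gi); lia.
  - intros Gi HG. split.
    + unfold qB. pose proof (lam_range k Gi (k-1) ltac:(lia)).
      pose proof (lam_range k (S Gi) 0 ltac:(lia)). rewrite S_INR. unfold Rdiv.
      apply Rplus_lt_compat_l. apply Rmult_lt_compat_r; [apply Rinv_0_lt_compat; lra|]. apply Rmult_lt_compat_r; lra.
    + unfold wd. rewrite Nat.even_succ, <- Nat.negb_even. destruct (Nat.even Gi); simpl; lia.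
  - rewrite Hs0, Hsm; auto.
  - exact Hord.
Qed.

Theorem mainTheorem3 :
  exists c : R, c > 0 /\
  forall n tau : nat, (3 <= n)%nat -> (1 <= tau)%nat ->
  exists eps : R, eps > 0 /\
  exists (t : nat -> R) (traj : nat -> R -> R),
    piecewise_linear n tau t traj /\
    (exists T, central eps n traj (t 0%nat) (t tau) T) /\
    (forall T, central eps n traj (t 0%nat) (t tau) T ->
       complexity_ge traj (t 0%nat) (t tau) T (c * INR tau * INR n ^ 2)).
Proof.
  exists (1/32). split; [lra|].
  intros n tau Hn Htau.
  assert (HtauR : 0 <= INR tau) by apply pos_INR.
  destruct (le_lt_dec n 4) as [Hsm|Hbig].
  - destruct (small_design n tau Hn Htau) as [G Hc].
    exists 20. split; [lra|]. exists tt, trajS. split; [apply G|]. split.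
    + exists (Tstar n trajS). apply (Tstar_central n tau); auto.
    + intros T HC m s ent H0 Hm Hinc Hp _.
      pose proof (Hc T m s ent HC H0 Hm Hinc Hp) as Hle.
      apply le_INR in Hle.
      assert (INR n <= 4) by (replace 4 with (INR 4) by (simpl; ring); apply le_INR; auto).
      pose proof (pos_INR n).
      assert (INR n ^ 2 <= 16) by nra. nra.
  - destruct (big_design n tau ltac:(lia) Htau) as [G Hc].
    set (k := ((n - 1) / 4)%nat) in *.
    assert (Hk : (n <= 8 * k)%nat).
    { unfold k. pose proof (Nat.div_mod (n - 1) 4 ltac:(lia)).
      pose proof (Nat.mod_upper_bound (n - 1) 4 ltac:(lia)). lia. }
    exists (2 * (Hh k + INR k ^ 2 + 1)). split.
    { unfold Hh. pose proof (pos_INR k). nra. }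
    exists tt, (trajB k). split; [apply G|]. split.
    + exists (Tstar n (trajB k)). apply (Tstar_central n tau); auto.
    + intros T HC m s ent H0 Hm Hinc Hp _.
      pose proof (Hc T m s ent HC H0 Hm Hinc Hp) as Hle.
      apply le_INR in Hle. rewrite !mult_INR in Hle.
      apply le_INR in Hk. rewrite mult_INR in Hk.
      pose proof (pos_INR n). pose proof (pos_INR k).
      replace (INR 2) with 2 in Hle by (simpl; ring).
      replace (INR 8) with 8 in Hk by (simpl; ring).
      assert (INR n ^ 2 <= 64 * INR k ^ 2) by nra.
      assert (INR tau * INR n ^ 2 <= INR tau * (64 * INR k ^ 2)) by (apply Rmult_le_compat_l; lra).
      nra.
Qed.
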